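(* Let $q \geq 3$ be an integer, let $p$ be a prime with $p \geq q$, and let $r$ be a power of $p$. Let $\omega_0, \omega_1, \ldots, \omega_{q-1}$ be nonnegative integers with $\omega_0 + \omega_1 + \cdots + \omega_{q-1} = r$. Then for every integer $d_0$ with $1 \leq d_0 \leq r-2$, there exists a $q$-ary constant-composition code $C \subseteq V_{r,[\omega_0,\ldots,\omega_{q-1}]}(q)$ with minimum Hamming distance at least $\mu_p(d_0)+2$ and with $$|C| \;\geq\; \binom{r}{\omega_0,\omega_1,\ldots,\omega_{q-1}} \Big/ r^{d_0-1},$$ where $\binom{r}{\omega_0,\ldots,\omega_{q-1}} = \frac{r!}{\omega_0!\,\omega_1!\cdots\omega_{q-1}!}$ is the multinomial coefficient.
   Context: Let $\mathbb{Z}_q = \{0,1,\ldots,q-1\}$ and let $\mathbb{Z}_q^n$ be the set of $n$-tuples over $\mathbb{Z}_q$. For nonnegative integers $\omega_0,\ldots,\omega_{q-1}$ with sum $n$, $V_{n,[\omega_0,\ldots,\omega_{q-1}]}(q)$ denotes the set of $n$-tuples over $\mathbb{Z}_q$ in which, for each $j \in \{0,\ldots,q-1\}$, the symbol $j$ occurs exactly $\omega_j$ times. A $q$-ary constant-composition code with composition $[\omega_0,\ldots,\omega_{q-1}]$ is a subset of $V_{n,[\omega_0,\ldots,\omega_{q-1}]}(q)$; its minimum distance is the minimum Hamming distance between distinct codewords. For a prime $p$ and positive integer $e$, define $\mu_p(e) = e$ if $p \mid e$, and $\mu_p(e) = e-1$ otherwise. *)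

(* Defs.v *)
From mathcomp Require Import all_boot all_order all_algebra.
Set Implicit Arguments. Unset Strict Implicit. Unset Printing Implicit Defensive.

Definition word (n q : nat) := {ffun 'I_n -> 'I_q}.

Definition hamming n q (x y : word n q) : nat := #|[set i | x i != y i]|.

Definition constcomp n q (w : 'I_q -> nat) : {set word n q} :=
  [set x : word n q | [forall j : 'I_q, #|[set i | x i == j]| == w j]].

Definition min_dist_ge n q (C : {set word n q}) (d : nat) : Prop :=
  forall x y, x \in C -> y \in C -> x != y -> d <= hamming x y.

Definition mu (p e : nat) : nat := if p %| e then e else e.-1.

Definition multinomial n q (w : 'I_q -> nat) : nat :=
  n`! %/ \prod_(j < q) (w j)`!.

(* Main.v *)
Require Import Defs.
From mathcomp Require Import all_boot all_order all_algebra.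
From mathcomp Require Import all_field.
Import GRing.Theory Num.Theory.
Set Implicit Arguments. Unset Strict Implicit. Unset Printing Implicit Defensive.

Lemma card_setP (T : finType) (P : pred T) : #|[set i | P i]| = \sum_i (P i : nat).
Proof. by rewrite -sum1_card big_mkcond /=; apply: eq_bigr => i _; rewrite inE; case: (P i). Qed.

Definition rest n q (x : word n.+1 q) : word n q := [ffun i => x (lift ord0 i)].
Definition ext n q (s : 'I_q) (y : word n q) : word n.+1 q :=
  [ffun i => if unlift ord0 i is Some i' then y i' else s].

Lemma cnt_split n q (x : word n.+1 q) j :
  #|[set i | x i == j]| = (x ord0 == j) + #|[set i | rest x i == j]|.
Proof. by rewrite !card_setP big_ord_recl; congr (_ + _); apply: eq_bigr => i _; rewrite ffunE. Qed.

Lemma rest_ext n q s (y : word n q) : rest (ext s y) = y.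
Proof. by apply/ffunP => i; rewrite !ffunE liftK. Qed.
Lemma ext_ord0 n q s (y : word n q) : ext s y ord0 = s.
Proof. by rewrite ffunE unlift_none. Qed.
Lemma ext_rest n q (x : word n.+1 q) : ext (x ord0) (rest x) = x.
Proof.
apply/ffunP => i; rewrite !ffunE; case: unliftP => [i' ->|->] //; by rewrite ffunE.
Qed.

Definition wsub q (w : 'I_q -> nat) (s : 'I_q) := fun j => w j - (s == j).

Lemma ext_in n q w s (y : word n q) : 0 < w s ->
  (ext s y \in constcomp n.+1 w) = (y \in constcomp n (wsub w s)).
Proof.
move=> ws; rewrite !inE; apply: eq_forallb => j.
rewrite cnt_split rest_ext ext_ord0 /wsub.
case: (eqVneq s j) => [<-|ne]; last by rewrite add0n subn0.
by rewrite add1n subn1 -{1}(prednK ws) eqSS.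
Qed.

Lemma ext_inj n q s : injective (@ext n q s).
Proof. exact: can_inj (@rest_ext n q s). Qed.

Lemma card_fiber n q w s : 0 < w s ->
  #|[set x in constcomp n.+1 w | x ord0 == s]| = #|constcomp n (@wsub q w s)|.
Proof.
move=> ws; rewrite -(card_imset _ (@ext_inj n q s)); congr #|pred_of_set _|.
apply/setP => x; rewrite inE; apply/idP/imsetP.
  case/andP => xV /eqP x0; exists (rest x); last by rewrite -x0 ext_rest.
  by rewrite -(ext_in _ ws) -x0 ext_rest.
by case=> y yV ->; rewrite ext_in // yV ext_ord0 eqxx.
Qed.

Lemma fiber0 n q w s : w s = 0 ->
  [set x in constcomp n.+1 w | x ord0 == s] = set0 :> {set word n.+1 q}.
Proof.
move=> ws; apply/setP => x; rewrite !inE; apply/negP => /andP[/forallP/(_ s)/eqP].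
by rewrite cnt_split ws => h /eqP h0; move: h; rewrite h0 eqxx.
Qed.

Lemma card_split n q (w : 'I_q -> nat) :
  #|constcomp n.+1 w| = \sum_s #|[set x in constcomp n.+1 w | x ord0 == s]|.
Proof.
rewrite -sum1_card (partition_big (fun x : word n.+1 q => x ord0) predT) //=.
by apply: eq_bigr => s _; rewrite -sum1_card; apply: eq_bigl => x; rewrite !inE.
Qed.

From mathcomp Require Import zify.

Lemma card_cc n q (w : 'I_q -> nat) :
  \sum_j w j = n -> #|constcomp n w| * \prod_j (w j)`! = n`!.
Proof.
elim: n w => [|n IH] w hs.
  have w0 : forall j, w j = 0.
    by move=> j; move/eqP: hs; rewrite sum_nat_eq0 => /forallP/(_ j)/implyP/(_ isT)/eqP.
  rewrite big1 ?muln1; last by move=> j _; rewrite w0.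
  have -> : constcomp 0 w = setT.
    apply/setP => x; rewrite !inE; apply/forallP => j.
    by rewrite card_setP big_ord0 w0.
  by rewrite cardsT card_ffun !card_ord.
rewrite card_split big_distrl /=.
rewrite (eq_bigr (fun s => w s * n`!)); last first.
  move=> s _; have [ws|ws] := posnP (w s).
    by rewrite fiber0 // cards0 ws.
  rewrite card_fiber //.
  have E1 : \prod_j (w j)`! = w s * \prod_j (wsub w s j)`!.
    rewrite (bigD1 s) //= [in RHS](bigD1 s) //= /wsub eqxx subn1.
    rewrite -{1}(prednK ws) factS prednK // -mulnA; congr (_ * (_ * _)).
    by apply: eq_bigr => j /negbTE; rewrite eq_sym => ->; rewrite subn0.
  have E2 : \sum_j wsub w s j = n.
    rewrite (bigD1 s) //= in hs; rewrite (bigD1 s) //= /wsub eqxx subn1.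
    rewrite (eq_bigr (fun j => w j)); last first.
      by move=> j /negbTE; rewrite eq_sym => ->; rewrite subn0.
    move: hs; lia.
  by rewrite E1 mulnCA IH.
by rewrite -big_distrl /= hs factS.
Qed.

Lemma frob_sum (F : fieldType) p (chF : p \in [pchar F]%R) (I : finType)
  (c : I -> nat) (a : I -> F) j :
  ((\sum_i (c i)%:R * a i ^+ j) ^+ p = \sum_i (c i)%:R * a i ^+ (j * p))%R.
Proof.
rewrite -(pFrobenius_autE chF) rmorph_sum; apply: eq_bigr => i _.
by rewrite rmorphM rmorph_nat /= pFrobenius_autE -exprM.
Qed.

Lemma vdm (F : fieldType) n (pos : 'I_n -> F) (injp : injective pos) (z : 'I_n -> F) t :
  (forall j, (j < t)%N -> \sum_i z i * pos i ^+ j = 0)%R ->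
  #|[set i | z i != 0%R]| <= t -> forall i, z i = 0%R.
Proof.
move=> hz hD i0; apply/eqP/negPn/negP => zi0.
set D := [set i | z i != 0%R].
set rs := [seq pos b | b in D :\ i0].
set Q := (\prod_(a <- rs) ('X - a%:P))%R.
have szQ : size Q <= t.
  rewrite /Q size_prod_XsubC size_map -cardE.
  by move: hD; rewrite (cardsD1 i0 D) inE zi0.
have E : (\sum_i z i * Q.[pos i] = 0)%R.
  rewrite (eq_bigr (fun i => \sum_(j < size Q) Q`_j * (z i * pos i ^+ j)))%R; last first.
    move=> i _; rewrite horner_coef mulr_sumr; apply: eq_bigr => j _.
    by rewrite mulrCA.
  rewrite exchange_big /= big1 // => j _.
  by rewrite -mulr_sumr hz ?mulr0 // (leq_trans (ltn_ord j)).
move: E; rewrite (bigD1 i0) //= big1 ?addr0; last first.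
  move=> i ni; have [->|nz] := eqVneq (z i) 0%R; first by rewrite mul0r.
  apply/eqP; rewrite mulf_eq0; apply/orP; right.
  rewrite -/(root Q (pos i)) /Q root_prod_XsubC; apply/mapP; exists i => //.
  by rewrite mem_enum !inE ni nz.
apply/eqP; rewrite mulf_neq0 //.
rewrite -/(root Q (pos i0)) /Q root_prod_XsubC; apply/mapP => -[b].
by rewrite mem_enum !inE => /andP[nb _] /injp eb; rewrite eb eqxx in nb.
Qed.

Lemma natr_small_inj (F : fieldType) p (chF : p \in [pchar F]%R) a b :
  a < p -> b < p -> ((a%:R : F) == b%:R)%R = (a == b).
Proof.
wlog ab : a b / a <= b.
  move=> hw ap bp; have [h|h] := leqP a b; first exact: hw.
  rewrite eq_sym hw ?(ltnW h) //; exact: eq_sym.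
move=> ap bp; apply/eqP/eqP => [h|->] //.
have h0 : (((b - a)%:R : F) = 0)%R by rewrite natrB // h subrr.
have : p %| b - a by rewrite (dvdn_pcharf chF) h0.
have [bz|pos] := posnP (b - a); first by move=> _; apply/eqP; rewrite eqn_leq ab -subn_eq0 bz.
by move/(dvdn_leq pos); lia.
Qed.

Lemma wsum n q (w : 'I_q -> nat) (x : word n q) : x \in constcomp n w ->
  \sum_i (x i : nat) = \sum_(j < q) (j * w j).
Proof.
rewrite inE => /forallP hx.
rewrite (partition_big (fun i => x i) predT) //=; apply: eq_bigr => j _.
rewrite (eq_bigr (fun _ => (j : nat))); last by move=> i /eqP ->.
rewrite -(eqP (hx j)) mulnC -sum_nat_const; apply: eq_bigl => i; by rewrite inE.
Qed.

Theorem theorem1 (q p k : nat) (w : 'I_q -> nat) (d0 : nat) :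
  3 <= q -> prime p -> q <= p ->
  \sum_(j < q) w j = p ^ k ->
  1 <= d0 <= p ^ k - 2 ->
  exists C : {set word (p ^ k) q},
    [/\ C \subset constcomp (p ^ k) w,
        min_dist_ge C (mu p d0 + 2)
      & ((multinomial (p ^ k) w)%:R / ((p ^ k) ^ (d0 - 1))%:R <= (#|C|%:R : rat))%R].
Proof.
move=> q3 pp qp hsum /andP[d1 d2].
have k0 : 0 < k by case: k hsum d2 => //= _; rewrite expn0 => h; lia.
have [F chF cardF] := pPrimePowerField pp k0.
set n := p ^ k in hsum d2 cardF *.
pose pos (i : 'I_n) : F := enum_val (cast_ord (esym cardF) i).
have injp : injective pos.
  by move=> i j /enum_val_inj /cast_ord_inj.
pose s (x : word n q) j := (\sum_i ((x i : nat)%:R * pos i ^+ j))%R.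
pose syn (x : word n q) : {ffun 'I_(d0 - 1) -> F} := [ffun j : 'I_(d0 - 1) => s x (j : nat).+1].
set V := constcomp n w.
pose Cc c := [set x in V | syn x == c].
pose c0 : {ffun 'I_(d0 - 1) -> F} := [ffun => 0%R].
pose cm := [arg max_(c > c0) #|Cc c|].
have hcm : forall c, #|Cc c| <= #|Cc cm|.
  by rewrite /cm; case: arg_maxnP => // c _ h c'; exact: h.
have cardV : #|V| <= #|Cc cm| * n ^ (d0 - 1).
  have -> : #|V| = \sum_c #|Cc c|.
    rewrite -sum1_card (partition_big syn predT) //=.
    by apply: eq_bigr => c _; rewrite -sum1_card; apply: eq_bigl => x; rewrite !inE.
  apply: (@leq_trans (\sum_(c : {ffun 'I_(d0 - 1) -> F}) #|Cc cm|)); first by apply: leq_sum => c _; exact: hcm.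
  by rewrite sum_nat_const card_ffun card_ord cardF mulnC.
exists (Cc cm); split.
- by apply/subsetP => x; rewrite inE => /andP[].
- move=> x y /setIdP[xV /eqP sx] /setIdP[yV /eqP sy] nxy.
  have e : syn x = syn y by rewrite sx sy.
  have ssyn : forall j, 0 < j < d0 -> s x j = s y j.
    move=> j /andP[j0 jd].
    have jl : j.-1 < d0 - 1 by lia.
    have := congr1 (fun f : {ffun 'I_(d0 - 1) -> F} => f (Ordinal jl)) e.
    by rewrite /= !ffunE /= prednK.
  have s0e : forall z, z \in V -> s z 0 = ((\sum_(j < q) j * w j)%:R)%R.
    move=> z zV; rewrite /s (eq_bigr (fun i => ((z i : nat)%:R)%R)); last first.
      by move=> i _; rewrite expr0 mulr1.
    by rewrite -natr_sum (wsum zV).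
  have H1 : forall j, j < d0 -> s x j = s y j.
    move=> [|j] hj; first by rewrite (s0e x xV) (s0e y yV).
    by apply: ssyn; rewrite hj.
  have H2 : forall j, j < mu p d0 + 1 -> s x j = s y j.
    rewrite /mu; case: ifP => pd j hj; last by apply: H1; lia.
    have [jd|jd] := ltnP j d0; first exact: H1.
    have -> : j = d0 %/ p * p by rewrite divnK //; lia.
    rewrite /s -!(frob_sum chF); congr (_ ^+ _)%R; apply: H1.
    by rewrite ltn_Pdiv // prime_gt1.
  pose z i := ((x i : nat)%:R - (y i : nat)%:R : F)%R.
  have hz : forall j, j < mu p d0 + 1 -> (\sum_i z i * pos i ^+ j = 0)%R.
    move=> j hj; rewrite /z; under eq_bigr do rewrite mulrBl.
    by rewrite sumrB; apply/eqP; rewrite subr_eq0; apply/eqP; exact: H2.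
  have qlt : forall a : 'I_q, (a : nat) < p by move=> a; exact: leq_trans (ltn_ord a) qp.
  have zD : [set i | z i != 0%R] = [set i | x i != y i].
    by apply/setP => i; rewrite !inE /z subr_eq0 (natr_small_inj chF).
  rewrite leqNgt; apply/negP => hlt.
  have hD : #|[set i | z i != 0%R]| <= mu p d0 + 1 by rewrite zD; move: hlt; rewrite /hamming addn1 addn2 ltnS.
  have z0 := vdm injp hz hD.
  move/negP: nxy; apply; apply/eqP/ffunP => i.
  have := z0 i; rewrite /z => /eqP; rewrite subr_eq0 (natr_small_inj chF) // => /eqP.
  exact: val_inj.
- have npos : 0 < n by rewrite expn_gt0 prime_gt0.
  have mE : multinomial n w = #|V|.
    rewrite /multinomial -(card_cc hsum) mulnK //.
    by rewrite prodn_gt0 // => j; rewrite fact_gt0.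
  rewrite mE ler_pdivrMr; last by rewrite ltr0n expn_gt0 npos.
  rewrite -(natrM rat) ler_nat.
  exact: cardV.
Qed.
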